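(* Let $\rho\in(0,1)$ and $0<\alpha\le\min\{1/2,2\rho,2(1-\rho)\}$. Let $\Theta=[-\alpha/20,\alpha/20]$ and for $\theta\in\Theta$ set $l_1(\theta)=\frac{4\rho-\alpha}{16-8\alpha}+\theta$, $l_2(\theta)=l_1(\theta)+\rho/2$, $r_2(\theta)=l_2(\theta)+1/4$, $r_1(\theta)=r_2(\theta)+(1-\rho)/2$, $w_1=2\pi/\rho$, $w_2=2\pi/(1-\rho)$. Define the density $f(x|\theta)=0$ for $x\notin[0,1]$ and, for $x\in[0,1]$: $f(x|\theta)=2-\alpha$ on $[0,l_1(\theta)]\cup[r_1(\theta),1]$; $f(x|\theta)=\alpha$ on $(l_2(\theta),r_2(\theta)]$; $f(x|\theta)=\alpha+(1-\alpha)(\cos(w_1(x-l_1(\theta)))+1)$ on $[l_1(\theta),l_2(\theta)]$; $f(x|\theta)=\alpha+(1-\alpha)(\cos(w_2(r_1(\theta)-x))+1)$ on $[r_2(\theta),r_1(\theta)]$. For $t\ge1$ let $X_1,\dots,X_t$ be i.i.d. with density $f(\cdot|\theta)$ and joint density $f(X_1,\dots,X_t|\theta)$. Then for every $t\ge1$ and $\theta\in\Theta$, $$I_t(\theta):=\mathbb{E}_\theta\left[\left(\frac{\partial\log f(X_1,\dots,X_t|\theta)}{\partial\theta}\right)^2\right]\le\frac{4\pi^2 t}{\rho(1-\rho)}.$$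
   Context: $I_t(\theta)$ is the Fisher information of $t$ i.i.d. samples about the parameter $\theta$; $\mathbb{E}_\theta$ is the expectation over $X_1,\dots,X_t$. *)

(* Defs.v *)
From HB Require Import structures.
From mathcomp Require Import all_boot all_order all_algebra.
From mathcomp Require Import all_classical all_reals all_analysis.
Set Implicit Arguments. Unset Strict Implicit. Unset Printing Implicit Defensive.
Import Order.TTheory GRing.Theory Num.Theory.
Import numFieldNormedType.Exports.
Local Open Scope classical_set_scope.
Local Open Scope ring_scope.

Section Defs.
Variable R : realType.

Definition l1 (rho alpha theta : R) : R :=
  (4 * rho - alpha) / (16 - 8 * alpha) + theta.
Definition l2 (rho alpha theta : R) : R := l1 rho alpha theta + rho / 2.
Definition r2 (rho alpha theta : R) : R := l2 rho alpha theta + 1 / 4.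
Definition r1 (rho alpha theta : R) : R := r2 rho alpha theta + (1 - rho) / 2.
Definition w1 (rho : R) : R := 2 * pi / rho.
Definition w2 (rho : R) : R := 2 * pi / (1 - rho).

Definition dens (rho alpha theta x : R) : R :=
  if (0 <= x) && (x <= 1) then
    if x <= l1 rho alpha theta then 2 - alpha
    else if x <= l2 rho alpha theta then
      alpha + (1 - alpha) * (cos (w1 rho * (x - l1 rho alpha theta)) + 1)
    else if x <= r2 rho alpha theta then alpha
    else if x <= r1 rho alpha theta then
      alpha + (1 - alpha) * (cos (w2 rho * (r1 rho alpha theta - x)) + 1)
    else 2 - alpha
  else 0.

Definition joint_dens (rho alpha : R) (t : nat) (theta : R) (x : nat -> R) : R :=
  \prod_(i < t) dens rho alpha theta (x i).

Definition score (rho alpha : R) (t : nat) (x : nat -> R) (theta : R) : R :=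
  derive1 (fun th : R => ln (joint_dens rho alpha t th x)) theta.

Definition upd (x : nat -> R) (k : nat) (y : R) : nat -> R :=
  fun j => if j == k then y else x j.

Fixpoint iter_int (n : nat) (g : (nat -> R) -> \bar R) (x : nat -> R) : \bar R :=
  match n with
  | 0 => g x
  | n'.+1 => (\int[@lebesgue_measure R]_(y in setT) iter_int n' g (upd x n' y))%E
  end.

Definition fisher_info (rho alpha : R) (t : nat) (theta : R) : \bar R :=
  iter_int t (fun x => ((score rho alpha t x theta) ^+ 2
                         * joint_dens rho alpha t theta x)%:E) (fun _ => 0).
End Defs.

(* Main.v *)
Require Import Defs.
From HB Require Import structures.
From mathcomp Require Import all_boot all_order all_algebra.
From mathcomp Require Import all_classical all_reals all_analysis.
From mathcomp Require Import ring lra.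
From mathcomp Require Import measurable_realfun.
Set Implicit Arguments. Unset Strict Implicit. Unset Printing Implicit Defensive.
Import Order.TTheory GRing.Theory Num.Theory.
Import numFieldNormedType.Exports.
Local Open Scope classical_set_scope.
Local Open Scope ring_scope.

Section S.
Variable R : realType.

Lemma glue (f g1 g2 : R -> R) (c d e : R) : 0 < e ->
  is_derive c 1 g1 d -> is_derive c 1 g2 d ->
  (forall u, c - e < u <= c -> f u = g1 u) ->
  (forall u, c <= u < c + e -> f u = g2 u) ->
  is_derive c 1 f d.
Proof.
move=> e0 d1 d2 h1 h2.
have q1 : (fun h : R => h^-1 *: ((g1 \o shift c) (h *: (1:R)) - g1 c)) @ 0^' --> d.
  have E := @derive_val _ _ _ _ _ _ _ d1; rewrite /derive in E; rewrite -E.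
  exact: (@ex_derive _ _ _ _ _ _ _ d1).
have q2 : (fun h : R => h^-1 *: ((g2 \o shift c) (h *: (1:R)) - g2 c)) @ 0^' --> d.
  have E := @derive_val _ _ _ _ _ _ _ d2; rewrite /derive in E; rewrite -E.
  exact: (@ex_derive _ _ _ _ _ _ _ d2).
have fc1 : f c = g1 c by apply: h1; rewrite lexx andbT; lra.
have fc2 : f c = g2 c by apply: h2; rewrite lexx /=; lra.
have qf : (fun h : R => h^-1 *: ((f \o shift c) (h *: (1:R)) - f c)) @ 0^' --> d.
  apply: (@cvg_at_right_left_dnbhs R R^o).
  - apply: cvg_trans; last exact: (cvg_dnbhs_at_right q2).
    apply: near_eq_cvg; near=> h => /=.
    have hp : 0 < h by near: h; exact: nbhs_right_gt.
    have he : h < e by near: h; apply: nbhs_right_lt.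
    rewrite -[h%:A]/(h * 1) mulr1 fc2 h2 //; apply/andP; split; lra.
  - apply: cvg_trans; last exact: (cvg_dnbhs_at_left q1).
    apply: near_eq_cvg; near=> h => /=.
    have hp : h < 0 by near: h; exact: nbhs_left_lt.
    have he : - e < h by near: h; apply: nbhs_left_gt; lra.
    rewrite -[h%:A]/(h * 1) mulr1 fc1 h1 //; apply/andP; split; lra.
apply: DeriveDef; first by apply/cvg_ex; exists d.
by apply: cvg_lim.
Unshelve. all: by end_near. Qed.

Definition clamp (a b u : R) : R := Num.min (Num.max u a) b.

Lemma clamp_lo a b u : a <= b -> u <= a -> clamp a b u = a.
Proof. by move=> ab ua; rewrite /clamp max_r // min_l. Qed.
Lemma clamp_mid a b u : a <= u -> u <= b -> clamp a b u = u.
Proof. by move=> au ub; rewrite /clamp max_l // min_l. Qed.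
Lemma clamp_hi a b u : a <= b -> b <= u -> clamp a b u = b.
Proof. move=> ab bu; rewrite /clamp min_r //; rewrite le_max; apply/orP; left; lra. Qed.

Definition ext (g : R -> R) (a b ka kb : R) (v : R) : R :=
  g (clamp a b v) + ka * Num.min (v - a) 0 + kb * Num.max (v - b) 0.

Lemma ext_lo g a b ka kb v : a <= b -> v <= a -> ext g a b ka kb v = g a + ka * (v - a).
Proof. by move=> ab va; rewrite /ext clamp_lo // min_l ?max_r; [rewrite mulr0 addr0|lra|lra]. Qed.
Lemma ext_mid g a b ka kb v : a <= v -> v <= b -> ext g a b ka kb v = g v.
Proof. by move=> av vb; rewrite /ext clamp_mid // min_r ?max_r; [rewrite !mulr0 !addr0|lra|lra]. Qed.
Lemma ext_hi g a b ka kb v : a <= b -> b <= v -> ext g a b ka kb v = g b + kb * (v - b).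
Proof. by move=> ab bv; rewrite /ext clamp_hi // min_r ?max_l; [rewrite mulr0 addr0|lra|lra]. Qed.

Lemma aff_derive (c0 k a x : R) : is_derive x 1 (fun v : R => c0 + k * (v - a)) k.
Proof.
have -> : (fun v : R => c0 + k * (v - a)) = (cst c0 + cst k * (id - cst a))%R.
  by apply/funext => v.
apply: is_derive_eq.
by rewrite /= !scaler0 addr0 subr0 add0r; rewrite -[_ *: _]/(k * 1) mulr1.
Qed.

Lemma ext_derive (g g' : R -> R) (a b ka kb : R) : a < b ->
  (forall u : R, is_derive u 1 g (g' u)) -> ka = g' a -> kb = g' b ->
  forall u : R, is_derive u 1 (ext g a b ka kb) (g' (clamp a b u)).
Proof.
move=> ab dg -> -> u.
have ab' : a <= b by lra.
have A1 := aff_derive (g a) (g' a) a.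
have A2 := aff_derive (g b) (g' b) b.
case: (ltgtP u a) => [ua|au|->].
- rewrite clamp_lo; last lra; last lra.
  apply: (@glue _ _ _ _ _ (a - u) _ (A1 u) (A1 u)); first lra.
  + by move=> v /andP[? ?]; rewrite ext_lo //; lra.
  + by move=> v /andP[? ?]; rewrite ext_lo //; lra.
- case: (ltgtP u b) => [ub|bu|->].
  + rewrite clamp_mid; [|lra|lra].
    have m1 : Num.min (u - a) (b - u) <= u - a by rewrite ge_min lexx.
    have m2 : Num.min (u - a) (b - u) <= b - u by rewrite ge_min lexx orbT.
    apply: (@glue _ _ _ _ _ (Num.min (u - a) (b - u)) _ (dg u) (dg u)).
    * by rewrite lt_min; apply/andP; split; lra.
    * by move=> v /andP[v1 v2]; rewrite ext_mid //; lra.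
    * by move=> v /andP[v1 v2]; rewrite ext_mid //; lra.
  + rewrite clamp_hi; [|lra|lra].
    apply: (@glue _ _ _ _ _ (u - b) _ (A2 u) (A2 u)); first lra.
    * by move=> v /andP[? ?]; rewrite ext_hi //; lra.
    * by move=> v /andP[? ?]; rewrite ext_hi //; lra.
  + rewrite clamp_mid; [|lra|lra].
    apply: (@glue _ _ _ _ _ (b - a) _ (dg b) (A2 b)); first lra.
    * by move=> v /andP[? ?]; rewrite ext_mid //; lra.
    * by move=> v /andP[? ?]; rewrite ext_hi //; lra.
- rewrite clamp_mid; [|lra|lra].
  apply: (@glue _ _ _ _ _ (b - a) _ (A1 a) (dg a)); first lra.
  + by move=> v /andP[? ?]; rewrite ext_lo //; lra.
  + by move=> v /andP[? ?]; rewrite ext_mid //; lra.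
Qed.
End S.

Section S2.
Variable R : realType.
Notation mu := (@lebesgue_measure R).

Lemma is_derive_comp1 (f g : R -> R) (x df dg : R) :
  is_derive x 1 f df -> is_derive (f x) 1 g dg -> is_derive x 1 (g \o f) (dg * df).
Proof.
move=> hf hg.
have df1 : derivable f x 1 := @ex_derive _ _ _ _ _ _ _ hf.
have dg1 : derivable g (f x) 1 := @ex_derive _ _ _ _ _ _ _ hg.
apply: DeriveDef.
  apply/derivable1_diffP; apply: differentiable_comp; exact/derivable1_diffP.
rewrite -derive1E derive1_comp // !derive1E.
by rewrite (@derive_val _ _ _ _ _ _ _ hf) (@derive_val _ _ _ _ _ _ _ hg).
Qed.

Lemma lin_derive (k a x : R) : is_derive x 1 (fun v : R => k * (v - a)) k.
Proof.
have := aff_derive 0 k a x.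
by have -> : (fun v : R => 0 + k * (v - a)) = (fun v : R => k * (v - a)) by apply/funext => v; rewrite add0r.
Qed.

Lemma clamp_cont (a b : R) : continuous (clamp a b).
Proof.
move=> x.
have -> : clamp a b = ((fun u : R => Num.max u a) \min (cst b)) by [].
apply: (@continuous_min R R^o); last exact: cst_continuous.
apply: (@continuous_max R R^o); last exact: cst_continuous.
by [].
Qed.

Lemma ftc_all (f F : R -> R) (a b : R) : a < b -> continuous f ->
  (forall x : R, is_derive x 1 F (f x)) ->
  (\int[mu]_(x in `[a, b]) (f x)%:E = (F b - F a)%:E)%E.
Proof.
move=> ab cf dF.
have cF : continuous F.
  move=> x; apply: differentiable_continuous; apply/derivable1_diffP.
  exact: (@ex_derive _ _ _ _ _ _ _ (dF x)).
rewrite EFinB; apply: continuous_FTC2 => //.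
- exact: continuous_subspaceT.
- split.
  + move=> x _; exact: (@ex_derive _ _ _ _ _ _ _ (dF x)).
  + exact: cvg_at_right_filter (cF a).
  + exact: cvg_at_left_filter (cF b).
- by move=> x _; rewrite derive1E (@derive_val _ _ _ _ _ _ _ (dF x)).
Qed.
End S2.

Lemma key (R : realType) (a al k s c : R) : 0 <= a -> 0 <= al -> c ^+ 2 + s ^+ 2 = 1 -> -1 <= c -> c <= 1 ->
  (a * (s * k)) ^+ 2 <= 2 * a * (k ^+ 2) * (al + a * (c + 1)).
Proof.
move=> a0 al0 cs c1 c2.
have h1 : s ^+ 2 <= 2 * (1 + c) by nra.
have h2 : 0 <= a * k ^+ 2 by apply: mulr_ge0 => //; exact: sqr_ge0.
have h3 : 0 <= a * k ^+ 2 * al by apply: mulr_ge0.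
have -> : (a * (s * k)) ^+ 2 = a * k ^+ 2 * (a * s ^+ 2) by ring.
have -> : 2 * a * k ^+ 2 * (al + a * (c + 1)) = 2 * (a * k ^+2 * al) + a * k ^+ 2 * (a * (2 * (1 + c))) by ring.
have : a * k ^+ 2 * (a * s ^+ 2) <= a * k ^+ 2 * (a * (2 * (1 + c))).
  by apply: ler_wpM2l => //; apply: ler_wpM2l.
lra.
Qed.

Section S3.
Variable R : realType.
Variables rho al : R.
Hypothesis hr0 : 0 < rho.
Hypothesis hr1 : rho < 1.
Hypothesis ha0 : 0 < al.
Hypothesis ha1 : al <= 1 / 2.
Ltac lra' := move: (hr0) (hr1) (ha0) (ha1) => ? ? ? ?; lra.

Let L1 := l1 rho al 0.
Let L2 := l2 rho al 0.
Let R2 := r2 rho al 0.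
Let R1 := r1 rho al 0.
Let W1 := w1 rho.
Let W2 := w2 rho.

Lemma W1L : W1 * (L2 - L1) = pi.
Proof. rewrite /W1 /w1 /L2 /l2 -/L1; field; rewrite gt_eqF //. Qed.
Lemma W2R : W2 * (R1 - R2) = pi.
Proof. rewrite /W2 /w2 /R1 /r1 -/R2; field; rewrite gt_eqF // subr_gt0; exact: hr1. Qed.
Lemma L12 : L1 < L2. Proof. rewrite /L2 /l2 -/L1; lra'. Qed.
Lemma L2R2 : L2 < R2. Proof. rewrite /R2 /r2 -/L2; lra'. Qed.
Lemma R21 : R2 < R1. Proof. rewrite /R1 /r1 -/R2; lra'. Qed.

Definition g1 (v : R) : R := cos (W1 * (v - L1)).
Definition g1' (v : R) : R := - sin (W1 * (v - L1)) * W1.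
Definition g2 (v : R) : R := cos (- W2 * (v - R1)).
Definition g2' (v : R) : R := - sin (- W2 * (v - R1)) * - W2.

Lemma g1_derive (x : R) : is_derive x 1 g1 (g1' x).
Proof.
exact: (is_derive_comp1 (lin_derive W1 L1 x) (is_derive_cos _)).
Qed.
Lemma g2_derive (x : R) : is_derive x 1 g2 (g2' x).
Proof.
exact: (is_derive_comp1 (lin_derive (- W2) R1 x) (is_derive_cos _)).
Qed.

Lemma g1'L1 : g1' L1 = 0. Proof. by rewrite /g1' subrr mulr0 sin0 oppr0 mul0r. Qed.
Lemma g1'L2 : g1' L2 = 0. Proof. by rewrite /g1' W1L sinpi oppr0 mul0r. Qed.
Lemma g2'R1 : g2' R1 = 0. Proof. by rewrite /g2' subrr mulr0 sin0 oppr0 mul0r. Qed.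
Lemma g2'R2 : g2' R2 = 0.
Proof. by rewrite /g2' (_ : - W2 * (R2 - R1) = pi) ?sinpi ?oppr0 ?mul0r // -W2R; ring. Qed.

Definition psi1 := ext g1 L1 L2 0 0.
Definition psi2 := ext g2 R2 R1 0 0.
Definition H (u : R) : R := al + (1 - al) * ((psi1 u + 1) + (psi2 u + 1)).
Definition H' (u : R) : R := (1 - al) * (g1' (clamp L1 L2 u) + g2' (clamp R2 R1 u)).

Lemma H_derive (u : R) : is_derive u 1 H (H' u).
Proof.
have d1 := ext_derive L12 g1_derive (esym g1'L1) (esym g1'L2).
have d2 := ext_derive R21 g2_derive (esym g2'R2) (esym g2'R1).
have -> : H = (cst al + cst (1 - al) * ((psi1 + cst 1) + (psi2 + cst 1)))%R by [].
apply: is_derive_eq.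
by rewrite /H' /= !addr0 !scaler0 !addr0 add0r -[_ *: _]/(_ * _) mulrC.
Qed.

Lemma psi1E u : psi1 u = g1 (clamp L1 L2 u).
Proof. by rewrite /psi1 /ext !mul0r !addr0. Qed.
Lemma psi2E u : psi2 u = g2 (clamp R2 R1 u).
Proof. by rewrite /psi2 /ext !mul0r !addr0. Qed.

Lemma g1L1 : g1 L1 = 1. Proof. by rewrite /g1 subrr mulr0 cos0. Qed.
Lemma g1L2 : g1 L2 = -1. Proof. by rewrite /g1 W1L cospi. Qed.
Lemma g2R1 : g2 R1 = 1. Proof. by rewrite /g2 subrr mulr0 cos0. Qed.
Lemma g2R2 : g2 R2 = -1.
Proof. by rewrite /g2 (_ : - W2 * (R2 - R1) = pi) ?cospi // -W2R; ring. Qed.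

Lemma psi1_lo u : u <= L1 -> psi1 u = 1.
Proof. by move=> h; rewrite psi1E clamp_lo ?g1L1 //; have := L12; lra'. Qed.
Lemma psi1_hi u : L2 <= u -> psi1 u = -1.
Proof. by move=> h; rewrite psi1E clamp_hi ?g1L2 //; have := L12; lra'. Qed.
Lemma psi1_mid u : L1 <= u -> u <= L2 -> psi1 u = g1 u.
Proof. by move=> h1 h2; rewrite psi1E clamp_mid. Qed.
Lemma psi2_lo u : u <= R2 -> psi2 u = -1.
Proof. by move=> h; rewrite psi2E clamp_lo ?g2R2 //; have := R21; lra'. Qed.
Lemma psi2_hi u : R1 <= u -> psi2 u = 1.
Proof. by move=> h; rewrite psi2E clamp_hi ?g2R1 //; have := R21; lra'. Qed.
Lemma psi2_mid u : R2 <= u -> u <= R1 -> psi2 u = g2 u.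
Proof. by move=> h1 h2; rewrite psi2E clamp_mid. Qed.

Lemma dens_H th x : 0 <= x <= 1 -> dens rho al th x = H (x - th).
Proof.
move=> x01; rewrite /dens x01.
have E1 : l1 rho al th = L1 + th by rewrite /L1 /l1; ring.
have E2 : l2 rho al th = L2 + th by rewrite /L2 /l2 /l1; ring.
have E3 : r2 rho al th = R2 + th by rewrite /R2 /r2 /l2 /l1; ring.
have E4 : r1 rho al th = R1 + th by rewrite /R1 /r1 /r2 /l2 /l1; ring.
have := L12; have := L2R2; have := R21 => h3 h2 h1.
rewrite E1 E2 E3 E4 /H.
case: ifP => c1.
  rewrite psi1_lo ?psi2_lo; [ring| lra' | lra'].
case: ifP => c2.
  rewrite psi1_mid ?psi2_lo /g1 -/W1; [|lra'|lra'|lra'].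
  by rewrite (_ : x - (L1 + th) = x - th - L1); ring.
case: ifP => c3.
  rewrite psi1_hi ?psi2_lo; [ring| lra' | lra'].
case: ifP => c4.
  rewrite psi1_hi ?psi2_mid /g2 -/W2; [|lra'|lra'|lra'].
  rewrite (_ : - W2 * (x - th - R1) = W2 * (R1 + th - x)); [ring|ring].
rewrite psi1_hi ?psi2_hi; [ring| lra' | lra'].
Qed.

Lemma H_ge u : al <= H u.
Proof.
rewrite /H psi1E psi2E.
have := cos_geN1 (W1 * (clamp L1 L2 u - L1)); have := cos_geN1 (- W2 * (clamp R2 R1 u - R1)).
rewrite /g1 /g2 => c1 c2.
have h : 0 <= (1 - al) * (cos (W1 * (clamp L1 L2 u - L1)) + 1 + (cos (- W2 * (clamp R2 R1 u - R1)) + 1)).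
  apply: mulr_ge0; lra'.
lra.
Qed.

Lemma H_gt0 u : 0 < H u.
Proof. have := H_ge u; lra'. Qed.

Lemma H_lo u : u <= L1 -> H u = 2 - al.
Proof.
move=> h; have := L12; have := L2R2 => ? ?.
rewrite /H psi1_lo ?psi2_lo; [ring|lra'|lra'].
Qed.
Lemma H_hi u : R1 <= u -> H u = 2 - al.
Proof.
move=> h; have := L12; have := L2R2; have := R21 => ? ? ?.
rewrite /H psi1_hi ?psi2_hi; [ring|lra'|lra'].
Qed.

Lemma H_cont : continuous H.
Proof.
move=> x; apply: differentiable_continuous; apply/derivable1_diffP.
exact: (@ex_derive _ _ _ _ _ _ _ (H_derive x)).
Qed.

Lemma H'_cont : continuous H'.
Proof.
move=> x.
have cl1 := @clamp_cont _ L1 L2 x.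
have cl2 := @clamp_cont _ R2 R1 x.
have c1 : {for x, continuous (fun u => g1' (clamp L1 L2 u))}.
  rewrite /g1'.
  apply: (@continuousM R R^o); last exact: cst_continuous.
  apply: (@continuousN R R^o).
  apply: continuous_comp; last exact: continuous_sin.
  apply: (@continuousM R R^o); first exact: cst_continuous.
  apply: (@continuousB R R^o) => //; exact: cst_continuous.
have c2 : {for x, continuous (fun u => g2' (clamp R2 R1 u))}.
  rewrite /g2'.
  apply: (@continuousM R R^o); last exact: cst_continuous.
  apply: (@continuousN R R^o).
  apply: continuous_comp; last exact: continuous_sin.
  apply: (@continuousM R R^o); first exact: cst_continuous.
  apply: (@continuousB R R^o) => //; exact: cst_continuous.
have -> : H' = (fun u => (1 - al) * (g1' (clamp L1 L2 u) + g2' (clamp R2 R1 u))) by [].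
apply: (@continuousM R R^o (cst (1 - al)) (fun u => g1' (clamp L1 L2 u) + g2' (clamp R2 R1 u))); first exact: cst_continuous.
exact: (@continuousD R R^o).
Qed.

Definition K (u : R) : R := (if L1 <= u <= L2 then W1 ^+ 2 else 0) + (if R2 <= u <= R1 then W2 ^+ 2 else 0).

Lemma K_ge0 u : 0 <= K u.
Proof. by rewrite /K; apply: addr_ge0; case: ifP; rewrite ?sqr_ge0. Qed.

Lemma H'_sq u : H' u ^+ 2 <= 2 * (1 - al) * K u * H u.
Proof.
have := L12; have := L2R2; have := R21 => h3 h2 h1.
have rhs0 : 0 <= 2 * (1 - al) * K u * H u.
  apply: mulr_ge0; last exact/ltW/H_gt0.
  apply: mulr_ge0; last exact: K_ge0.
  apply: mulr_ge0; lra'.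
have z : forall a b, a = 0 -> b = 0 -> (1 - al) * (g1' a + g2' b) = 0 -> True by [].
case: (lerP u L1) => u1.
  by rewrite /H' clamp_lo ?clamp_lo ?g1'L1 ?g2'R2 ?addr0 ?mulr0 ?expr0n //= ?sqr_ge0; lra'.
case: (lerP u L2) => u2.
  rewrite /H' /K clamp_mid ?clamp_lo ?g2'R2 ?addr0; [|lra'|lra'|lra'|lra'].
  rewrite (_ : (L1 <= u <= L2) = true); last by apply/andP; split; lra'.
  rewrite (_ : (R2 <= u <= R1) = false); last by apply/negbTE/negP => /andP[? ?]; lra'.
  rewrite /= addr0 /H psi1_mid ?psi2_lo; [|lra'|lra'|lra'].
  rewrite /g1' /g1 (_ : -1 + 1 = 0 :> R) ?addr0; last ring.
  rewrite mulNr -mulrN (_ : 2 * (1 - al) * W1 ^+ 2 = 2 * (1 - al) * (- W1) ^+ 2); last by rewrite sqrrN.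
  apply: key; [lra'|lra'| |exact: cos_geN1|exact: cos_le1].
  exact: cos2Dsin2.
case: (lerP u R2) => u3.
  by rewrite /H' clamp_hi ?clamp_lo ?g1'L2 ?g2'R2 ?addr0 ?mulr0 ?expr0n //= ?sqr_ge0; lra'.
case: (lerP u R1) => u4.
  rewrite /H' /K clamp_hi ?clamp_mid ?g1'L2 ?add0r; [|lra'|lra'|lra'|lra'].
  rewrite (_ : (L1 <= u <= L2) = false); last by apply/negbTE/negP => /andP[? ?]; lra'.
  rewrite (_ : (R2 <= u <= R1) = true); last by apply/andP; split; lra'.
  rewrite /= add0r /H psi1_hi ?psi2_mid; [|lra'|lra'|lra'].
  rewrite /g2' /g2 (_ : -1 + 1 = 0 :> R) ?add0r; last ring.
  rewrite mulNr -mulrN (_ : 2 * (1 - al) * W2 ^+ 2 = 2 * (1 - al) * (- - W2) ^+ 2); last by rewrite opprK.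
  apply: key; [lra'|lra'| |exact: cos_geN1|exact: cos_le1].
  exact: cos2Dsin2.
by rewrite /H' clamp_hi ?clamp_hi ?g1'L2 ?g2'R1 ?addr0 ?mulr0 ?expr0n //= ?sqr_ge0; lra'.
Qed.

End S3.

Section S4.
Variable R : realType.
Variables rho al : R.
Hypothesis hr0 : 0 < rho.
Hypothesis hr1 : rho < 1.
Hypothesis ha0 : 0 < al.
Hypothesis ha1 : al <= 1 / 2.
Ltac lra' := move: (hr0) (hr1) (ha0) (ha1) => ? ? ? ?; lra.
Let L1 := l1 rho al 0.
Let L2 := l2 rho al 0.
Let R2 := r2 rho al 0.
Let R1 := r1 rho al 0.
Let W1 := w1 rho.
Let W2 := w2 rho.
Lemma W1_gt0 : 0 < W1.
Proof. by rewrite /W1 /w1; apply: divr_gt0 => //; rewrite mulr_gt0 // pi_gt0. Qed.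
Lemma W2_gt0 : 0 < W2.
Proof. rewrite /W2 /w2; apply: divr_gt0; first by rewrite mulr_gt0 // pi_gt0. lra'. Qed.

Definition G1 (v : R) : R := W1^-1 * sin (W1 * (v - L1)).

Lemma G1_derive (x : R) : is_derive x 1 G1 (g1 rho al x).
Proof.
have -> : G1 = (fun v => W1^-1 * (sin \o (fun v => W1 * (v - L1))) v) by [].
have d := is_derive_comp1 (lin_derive W1 L1 x) (is_derive_sin _).
apply: is_derive_eq.
rewrite -[_ *: _]/(W1^-1 * (cos (W1 * (x - L1)) * W1)) mulrCA mulVf ?mulr1 //.
by have := W1_gt0; rewrite lt0r => /andP[].
Qed.

Definition G2 (v : R) : R := (- W2)^-1 * sin (- W2 * (v - R1)).
Lemma G2_derive (x : R) : is_derive x 1 G2 (g2 rho al x).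
Proof.
have -> : G2 = (fun v => (- W2)^-1 * (sin \o (fun v => - W2 * (v - R1))) v) by [].
have d := is_derive_comp1 (lin_derive (- W2) R1 x) (is_derive_sin _).
apply: is_derive_eq.
rewrite -[_ *: _]/((- W2)^-1 * (cos (- W2 * (x - R1)) * - W2)) mulrCA mulVf ?mulr1 //.
by have := W2_gt0; rewrite oppr_eq0 lt0r => /andP[].
Qed.

Definition Psi1 := ext G1 L1 L2 (g1 rho al L1) (g1 rho al L2).
Definition Psi2 := ext G2 R2 R1 (g2 rho al R2) (g2 rho al R1).
Definition Phi (u : R) : R := al * u + (1 - al) * ((Psi1 u + u) + (Psi2 u + u)).

Lemma Phi_derive (u : R) : is_derive u 1 Phi (H rho al u).
Proof.
have d1 := ext_derive (L12 hr0 hr1 ha0 ha1) G1_derive erefl erefl u.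
have d2 := ext_derive (R21 hr0 hr1 ha0 ha1) G2_derive erefl erefl u.
have -> : Phi = (fun v => al * v + (1 - al) * ((Psi1 v + v) + (Psi2 v + v))) by [].
apply: is_derive_eq.
rewrite /H psi1E psi2E; congr (_ + _); exact: mulr1.
Qed.

Lemma shift_derive (F f : R -> R) (th : R) : (forall x : R, is_derive x 1 F (f x)) ->
  forall x : R, is_derive x 1 (fun v => F (v - th)) (f (x - th)).
Proof.
move=> dF x; have := is_derive_comp1 (lin_derive 1 th x) (dF _).
rewrite mul1r mulr1.
have -> : (F \o (fun v : R => 1 * (v - th))) = (fun v => F (v - th)) by apply/funext => v /=; rewrite mul1r.
by [].
Qed.

Lemma shift_cont (f : R -> R) (th : R) : continuous f -> continuous (fun v => f (v - th)).
Proof.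
move=> cf x; apply: continuous_comp; last exact: cf.
apply: (@continuousB R R^o) => //; exact: cst_continuous.
Qed.

Lemma int01 (f : R -> R) : continuous f -> (@lebesgue_measure R).-integrable `[0, 1] (EFin \o f).
Proof.
move=> cf; apply: continuous_compact_integrable; first exact: segment_compact.
exact: continuous_subspaceT.
Qed.

Lemma G1L1 : G1 L1 = 0. Proof. by rewrite /G1 subrr mulr0 sin0 mulr0. Qed.
Lemma G1L2 : G1 L2 = 0. Proof. by rewrite /G1 (W1L al hr0) sinpi mulr0. Qed.
Lemma G2R1 : G2 R1 = 0. Proof. by rewrite /G2 subrr mulr0 sin0 mulr0. Qed.
Lemma G2R2 : G2 R2 = 0.
Proof. by rewrite /G2 (_ : - W2 * (R2 - R1) = pi) ?sinpi ?mulr0 // -(W2R al hr1) /W2 /R1 /R2; ring. Qed.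

Variable th : R.
Hypothesis hL : - th <= L1.
Hypothesis hR : R1 <= 1 - th.

Lemma int_H : (\int[@lebesgue_measure R]_(x in `[0%R, 1%R]) (H rho al (x - th))%:E = 1%:E)%E.
Proof.
rewrite (ftc_all _ (shift_cont (th:=th) (H_cont hr0 hr1 ha0 ha1)) (shift_derive th Phi_derive)) ?ltr01 //.
have := L12 hr0 hr1 ha0 ha1; have := L2R2 hr0 hr1 ha0 ha1; have := R21 hr0 hr1 ha0 ha1.
rewrite -/L1 -/L2 -/R2 -/R1 => h1 h2 h3.
have hL' := hL; have hR' := hR.
congr (_%:E).
rewrite /Phi /Psi1 /Psi2 sub0r.
rewrite (@ext_lo R G1 L1 L2 _ _ (- th)); [|lra|lra].
rewrite (@ext_lo R G2 R2 R1 _ _ (- th)); [|lra|lra].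
rewrite (@ext_hi R G1 L1 L2 _ _ (1 - th)); [|lra|lra].
rewrite (@ext_hi R G2 R2 R1 _ _ (1 - th)); [|lra|lra].
rewrite G1L1 G1L2 G2R1 G2R2 (g1L1 rho al) (g1L2 al hr0) (g2R1 rho al) (g2R2 al hr1).
rewrite /R1 /R2 /L2 /L1 /r1 /r2 /l2 /l1.
field; apply/eqP; lra'.
Qed.

Lemma int_H' : (\int[@lebesgue_measure R]_(x in `[0%R, 1%R]) (H' rho al (x - th))%:E = 0%:E)%E.
Proof.
rewrite (ftc_all _ (shift_cont (th:=th) (@H'_cont _ rho al)) (shift_derive th (H_derive hr0 hr1 ha0 ha1))) ?ltr01 //.
have := L12 hr0 hr1 ha0 ha1; have := L2R2 hr0 hr1 ha0 ha1; have := R21 hr0 hr1 ha0 ha1.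
rewrite -/L1 -/L2 -/R2 -/R1 => h1 h2 h3.
have hL' := hL; have hR' := hR.
rewrite sub0r (@H_hi _ _ _ hr0 hr1 ha0 ha1 (1 - th)) ?(@H_lo _ _ _ hr0 hr1 ha0 ha1 (- th)) ?subrr //.
Qed.
End S4.

Section S5.
Variable R : realType.
Variables rho al : R.
Hypothesis hr0 : 0 < rho.
Hypothesis hr1 : rho < 1.
Hypothesis ha0 : 0 < al.
Hypothesis ha1 : al <= 1 / 2.
Ltac lra' := move: (hr0) (hr1) (ha0) (ha1) => ? ? ? ?; lra.
Let L1 := l1 rho al 0.
Let L2 := l2 rho al 0.
Let R2 := r2 rho al 0.
Let R1 := r1 rho al 0.
Let W1 := w1 rho.
Let W2 := w2 rho.
Variable th : R.
Hypothesis hL : - th <= L1.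
Hypothesis hR : R1 <= 1 - th.
Notation mu := (@lebesgue_measure R).


Definition p3 (x : R) : R := H' rho al (x - th) ^+ 2 / H rho al (x - th).

Lemma p3_cont : continuous p3.
Proof.
move=> x.
apply: (@continuousM R R^o (fun x => H' rho al (x - th) ^+ 2) (fun x => (H rho al (x - th))^-1)).
  have c := @shift_cont _ _ th (@H'_cont _ rho al) x.
  rewrite /GRing.exp /=.
  exact: (@continuousM R R^o (fun x => H' rho al (x - th)) (fun x => H' rho al (x - th))).
apply: (@continuousV R R^o).
  by have := H_gt0 hr0 hr1 ha0 ha1 (x - th); rewrite lt0r => /andP[].
exact: (@shift_cont _ _ th (H_cont hr0 hr1 ha0 ha1) x).
Qed.

Lemma inshift (a b x : R) : (a <= x - th <= b) = (x \in `[a + th, b + th]%classic).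
Proof.
apply/idP/idP => [h|/set_mem]; first (apply: mem_set; move: h).
  by rewrite /= in_itv /= lerBrDr lerBlDr.
by rewrite /= in_itv /= lerBrDr lerBlDr.
Qed.

Lemma p3_le x : p3 x <= 2 * (1 - al) * (W1 ^+ 2 * \1_(`[L1 + th, L2 + th]%classic) x + W2 ^+ 2 * \1_(`[R2 + th, R1 + th]%classic) x).
Proof.
have Hp := H_gt0 hr0 hr1 ha0 ha1 (x - th).
have := H'_sq hr0 hr1 ha0 ha1 (x - th).
rewrite /p3 !indicE -!inshift /K -/L1 -/L2 -/R2 -/R1 -/W1 -/W2.
rewrite ler_pdivrMr //.
case: ifP => _; case: ifP => _; rewrite ?mulr1 ?mulr0 ?addr0 ?add0r //.
Qed.

Lemma muitv (a b : R) : a < b -> mu `[a, b]%classic = (b - a)%:E.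
Proof. by move=> ab; rewrite lebesgue_measure_itv /= lte_fin ab EFinB. Qed.

Lemma int_indic_sub (a b k : R) : 0 <= k -> 0 <= a -> a < b -> b <= 1 ->
  (\int[mu]_(x in `[0%R, 1%R]) (k * \1_(`[a, b]%classic) x)%:E = (k * (b - a))%:E)%E.
Proof.
move=> k0 a0 ab b1.
rewrite (@integralZl_indic _ _ _ mu _ (measurable_itv _) (fun _ => `[a, b]%classic) k) //; last first.
  by move=> k0'; exfalso; lra.
rewrite integral_indic //= setIidl ?muitv // //.
by move=> x /= ; rewrite !in_itv /= => /andP[h1 h2]; apply/andP; split; lra.
Qed.

Lemma p3_ge0 x : 0 <= p3 x.
Proof. by rewrite /p3; apply: divr_ge0; [exact: sqr_ge0|exact/ltW/H_gt0]. Qed.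

Lemma Jbound : (\int[mu]_(x in `[0%R, 1%R]) (p3 x)%:E <=
   (2 * (1 - al) * W1 ^+ 2 * (L2 - L1) + 2 * (1 - al) * W2 ^+ 2 * (R1 - R2))%:E)%E.
Proof.
have := L12 hr0 hr1 ha0 ha1; have := L2R2 hr0 hr1 ha0 ha1; have := R21 hr0 hr1 ha0 ha1.
rewrite -/L1 -/L2 -/R2 -/R1 => h1 h2 h3.
have hL' := hL; have hR' := hR.
have k0 : 0 <= 2 * (1 - al) by lra'.
have k1 : 0 <= 2 * (1 - al) * W1 ^+ 2 by apply: mulr_ge0 => //; exact: sqr_ge0.
have k2 : 0 <= 2 * (1 - al) * W2 ^+ 2 by apply: mulr_ge0 => //; exact: sqr_ge0.
apply: le_trans.
  apply: (@ge0_le_integral _ _ _ mu _ (measurable_itv _) _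
     (fun x => (2 * (1 - al) * W1 ^+ 2 * \1_(`[L1 + th, L2 + th]%classic) x)%:E +
               (2 * (1 - al) * W2 ^+ 2 * \1_(`[R2 + th, R1 + th]%classic) x)%:E)%E).
  - by move=> x _; rewrite lee_fin p3_ge0.
  - apply/measurable_EFinP; apply: measurable_funTS; apply: continuous_measurable_fun.
    exact: p3_cont.
  - apply: emeasurable_funD; apply/measurable_EFinP; apply: measurable_funM => //;
      exact: measurable_indic.
  - move=> x _; rewrite -EFinD lee_fin; apply: (le_trans (p3_le x)).
    by rewrite mulrDr !mulrA.
rewrite ge0_integralD //.
- rewrite !int_indic_sub //; [|lra|lra|lra|lra|lra|lra].
  by rewrite -EFinD lee_fin !(_ : forall a b, b + th - (a + th) = b - a) // => a b; ring.
- by move=> x _; rewrite lee_fin; apply: mulr_ge0 => //; rewrite indicE ler0n.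
- apply/measurable_EFinP; apply: measurable_funM => //; exact: measurable_indic.
- by move=> x _; rewrite lee_fin; apply: mulr_ge0 => //; rewrite indicE ler0n.
- apply/measurable_EFinP; apply: measurable_funM => //; exact: measurable_indic.
Qed.

Definition S (x : R) : R := if (0 <= x) && (x <= 1) then - H' rho al (x - th) / H rho al (x - th) else 0.
Definition J : R := fine (\int[mu]_(x in `[0%R, 1%R]) (p3 x)%:E)%E.

Lemma cont_scale (k : R) (f : R -> R) : continuous f -> continuous (fun x => k * f x).
Proof.
move=> cf x; apply: (@continuousM R R^o (cst k) f); [exact: cst_continuous|exact: cf].
Qed.

Lemma intE (f : R -> R) : continuous f ->
  (\int[mu]_(x in `[0%R, 1%R]) (f x)%:E)%E = (\int[mu]_(x in `[0%R, 1%R]) f x)%:E.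
Proof. by move=> cf; rewrite fineK //; apply: integrable_fin_num => //; exact: int01. Qed.

Lemma step (A c : R) (n : nat) :
  (\int[mu]_(y in setT) ((((A + S y) ^+ 2 + n%:R * J) * (c * dens rho al th y))%:E)
   = (((A ^+ 2 + n.+1%:R * J) * c)%:E))%E.
Proof.
set g := fun y => ((((A + S y) ^+ 2 + n%:R * J) * (c * dens rho al th y))%:E)%E.
have -> : g = (g \_ `[0%R, 1%R]%classic)%E.
  apply/funext => y; rewrite patchE; case: ifP => // /negbT hy.
  rewrite /g /dens; case: ifP; last by rewrite !mulr0.
  by move=> h; exfalso; move/negP: hy; apply; apply: mem_set; rewrite /= in_itv /=.
rewrite -integral_mkcond.
have c1 := shift_cont (th:=th) (H_cont hr0 hr1 ha0 ha1).
have c2 := shift_cont (th:=th) (@H'_cont _ rho al).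
have c3 := p3_cont.
have i1 := int01 c1. have i2 := int01 c2. have i3 := int01 c3.
rewrite (@eq_integral _ _ _ mu _ (fun y => ((c * (A ^+ 2 + n%:R * J) * H rho al (y - th) + (- 2 * A * c) * H' rho al (y - th)) + c * p3 y)%:E)%E); last first.
  move=> y /set_mem /= y01; rewrite /g /S.
  rewrite in_itv /= in y01; rewrite y01 (dens_H hr0 hr1 ha0 ha1) //.
  have Hp := H_gt0 hr0 hr1 ha0 ha1 (y - th).
  congr (_%:E); rewrite /p3; field.
  by rewrite gt_eqF.
rewrite intE; last first.
  move=> x; apply: (@continuousD R R^o R (fun y => c * (A ^+ 2 + n%:R * J) * H rho al (y - th) + (- 2 * A * c) * H' rho al (y - th)) (fun y => c * p3 y)); last exact: cont_scale.
  apply: (@continuousD R R^o R (fun y => c * (A ^+ 2 + n%:R * J) * H rho al (y - th)) (fun y => (- 2 * A * c) * H' rho al (y - th))); exact: cont_scale.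
rewrite RintegralD //; last first.
- exact: int01 (@cont_scale c p3 c3).
- apply: int01 => x.
  apply: (@continuousD R R^o R (fun y => c * (A ^+ 2 + n%:R * J) * H rho al (y - th)) (fun y => (- 2 * A * c) * H' rho al (y - th))); exact: cont_scale.
rewrite RintegralD //; [|exact: int01 (@cont_scale _ _ c1)|exact: int01 (@cont_scale _ _ c2)].
have z1 : (\int[mu]_(x in `[0%R, 1%R]) (c * (A ^+ 2 + n%:R * J) * H rho al (x - th)))%R = (c * (A ^+ 2 + n%:R * J)) * (\int[mu]_(x in `[0%R, 1%R]) H rho al (x - th))%R.
  exact: RintegralZl.
have z2 : (\int[mu]_(x in `[0%R, 1%R]) ((- 2 * A * c) * H' rho al (x - th)))%R = (- 2 * A * c) * (\int[mu]_(x in `[0%R, 1%R]) H' rho al (x - th))%R.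
  exact: RintegralZl.
have z3 : (\int[mu]_(x in `[0%R, 1%R]) (c * p3 x))%R = c * (\int[mu]_(x in `[0%R, 1%R]) p3 x)%R.
  exact: RintegralZl.
rewrite z1 z2 z3.
have e1 := int_H hr0 hr1 ha0 ha1 hL hR.
have e2 := int_H' hr0 hr1 ha0 ha1 hL hR.
rewrite intE // in e1; rewrite intE // in e2.
case: e1 => ->; case: e2 => ->.
rewrite -/J.
congr (_%:E).
change (\int[mu]_(x in `[0%R, 1%R]) p3 x)%R with J; rewrite -natr1; ring.
Qed.
End S5.

Section S6.
Variable R : realType.
Variables rho al : R.
Hypothesis hr0 : 0 < rho.
Hypothesis hr1 : rho < 1.
Hypothesis ha0 : 0 < al.
Hypothesis ha1 : al <= 1 / 2.
Ltac lra' := move: (hr0) (hr1) (ha0) (ha1) => ? ? ? ?; lra.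
Let L1 := l1 rho al 0.
Let L2 := l2 rho al 0.
Let R2 := r2 rho al 0.
Let R1 := r1 rho al 0.
Let W1 := w1 rho.
Let W2 := w2 rho.
Variable th : R.
Hypothesis hL : - th <= L1.
Hypothesis hR : R1 <= 1 - th.
Notation mu := (@lebesgue_measure R).

Lemma ln_prod (n : nat) (f : nat -> R) : (forall i, (i < n)%N -> 0 < f i) ->
  ln (\prod_(i < n) f i) = \sum_(i < n) ln (f i).
Proof.
elim: n => [|n IH] hf; first by rewrite !big_ord0 ln1.
rewrite !big_ord_recr /= lnM ?IH //.
- by move=> i hi; apply: hf; rewrite ltnS ltnW.
- rewrite posrE; apply: prodr_gt0 => i _; apply: hf; rewrite ltnS ltnW //.
- by rewrite posrE; apply: hf.
Qed.

Lemma score_E (t : nat) (z : nat -> R) : (forall i, (i < t)%N -> 0 <= z i <= 1) ->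
  score rho al t z th = \sum_(i < t) S rho al th (z i).
Proof.
move=> hz.
have Hp u := H_gt0 hr0 hr1 ha0 ha1 u.
rewrite /score derive1E.
have -> : (fun th' => ln (joint_dens rho al t th' z)) = \sum_(i < t) (fun th' => ln (H rho al (z i - th'))).
  rewrite fct_sumE; apply/funext => th'.
  rewrite /joint_dens (eq_bigr (fun i : 'I_t => H rho al (z i - th'))); last first.
    by move=> i _; rewrite (dens_H hr0 hr1 ha0 ha1) // hz.
  by rewrite (ln_prod (f := fun i => H rho al (z i - th'))).
have D : forall i : 'I_t, is_derive th 1 (fun th' => ln (H rho al (z i - th'))) (S rho al th (z i)).
  move=> i.
  have d1 : is_derive th 1 (fun v => z i - v) (-1).
    have := lin_derive (-1) (z i) th.
    by have -> : (fun v : R => -1 * (v - z i)) = (fun v => z i - v) by apply/funext => v; ring.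
  have d2 := is_derive_comp1 d1 (H_derive hr0 hr1 ha0 ha1 _).
  have d3 := is_derive_comp1 d2 (is_derive1_ln (Hp (z i - th))).
  apply: (is_derive_eq d3).
  rewrite /S hz //=; field.
  by rewrite gt_eqF.
by rewrite (@derive_val _ _ _ _ _ _ _ (is_derive_sum D)).
Qed.

Lemma iterE (n : nat) : forall (G : (nat -> R) -> \bar R) (x : nat -> R) (A c : R),
  (forall z : nat -> R, (forall j, (n <= j)%N -> z j = x j) ->
     G z = (((A + \sum_(i < n) S rho al th (z i)) ^+ 2) * (c * \prod_(i < n) dens rho al th (z i)))%:E) ->
  iter_int n G x = ((A ^+ 2 + n%:R * J rho al th) * c)%:E.
Proof.
elim: n => [|n IH] G x A c hG /=.
  by rewrite hG // !big_ord0 mulr1 addr0 mul0r addr0.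
have E : forall y, iter_int n G (upd x n y) = (((A + S rho al th y) ^+ 2 + n%:R * J rho al th) * (c * dens rho al th y))%:E.
  move=> y; rewrite (IH G (upd x n y) (A + S rho al th y) (c * dens rho al th y)) //.
  move=> z hz.
  have zn : z n = y by rewrite hz // /upd eqxx.
  rewrite hG; last first.
    move=> j hj; rewrite hz ?(ltnW hj) // /upd.
    by rewrite (_ : (j == n) = false) //; apply/negbTE; rewrite neq_ltn hj orbT.
  rewrite !big_ord_recr /= zn.
  congr (_%:E); ring.
rewrite (@eq_integral _ _ _ (@lebesgue_measure R) setT (fun y => ((((A + S rho al th y) ^+ 2 + n%:R * J rho al th) * (c * dens rho al th y))%:E))); last by move=> y _; exact: E.
exact: (step hr0 hr1 ha0 ha1 hL hR).
Qed.
End S6.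

Local Close Scope classical_set_scope.
Unset Implicit Arguments. Set Strict Implicit.

Theorem lemma4 (R : realType) (rho alpha : R)
  (hrho0 : 0 < rho) (hrho1 : rho < 1)
  (halpha0 : 0 < alpha) (halpha1 : alpha <= 1 / 2)
  (halpha2 : alpha <= 2 * rho) (halpha3 : alpha <= 2 * (1 - rho))
  (t : nat) (ht : (1 <= t)%N) (theta : R)
  (htheta : - (alpha / 20) <= theta <= alpha / 20) :
  (fisher_info rho alpha t theta
     <= (4 * pi ^+ 2 * t%:R / (rho * (1 - rho)))%:E)%E.
Proof.
case/andP: htheta => th1 th2.
have d0 : 0 < 16 - 8 * alpha by lra.
have hL : - theta <= l1 rho alpha 0.
  rewrite /l1 addr0.
  have : alpha / 20 <= (4 * rho - alpha) / (16 - 8 * alpha).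
    rewrite ler_pdivlMr // mulrAC ler_pdivrMr //; nra.
  lra.
have hR : r1 rho alpha 0 <= 1 - theta.
  rewrite /r1 /r2 /l2 /l1 addr0.
  have : (4 * rho - alpha) / (16 - 8 * alpha) <= 1 / 4 - alpha / 20.
    rewrite ler_pdivrMr //; nra.
  lra.
rewrite /fisher_info (@iterE R rho alpha hrho0 hrho1 halpha0 halpha1 theta hL hR t _ _ 0 1); last first.
  move=> z _.
  have [P0|P0] := eqVneq (\prod_(i < t) dens rho alpha theta (z i)) 0.
    by rewrite /joint_dens P0 !mulr0.
  rewrite (@score_E R rho alpha hrho0 hrho1 halpha0 halpha1 theta) ?add0r ?mul1r //.
  move=> i hi; case E : (0 <= z i <= 1) => //.
  have F0 : dens rho alpha theta (z (Ordinal hi)) = 0 by rewrite /dens /= E.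
  by move/eqP: P0; rewrite (bigD1 (Ordinal hi)) //= F0 mul0r.
rewrite lee_fin expr0n /= add0r mulr1.
have := Jbound hrho0 hrho1 halpha0 halpha1 hL hR.
rewrite (intE (@p3_cont R rho alpha hrho0 hrho1 halpha0 halpha1 theta)) lee_fin -/(J rho alpha theta) => hJ.
have eB : 2 * (1 - alpha) * w1 rho ^+ 2 * (l2 rho alpha 0 - l1 rho alpha 0) +
          2 * (1 - alpha) * w2 rho ^+ 2 * (r1 rho alpha 0 - r2 rho alpha 0)
        = (1 - alpha) * (4 * pi ^+ 2 / (rho * (1 - rho))).
  rewrite /w1 /w2 /r1 /r2 /l2 /l1; field.
  by rewrite !gt_eqF // subr_gt0.
rewrite eB in hJ.
have pp : 0 <= 4 * pi ^+ 2 / (rho * (1 - rho)).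
  apply: divr_ge0; first by apply: mulr_ge0 => //; exact: sqr_ge0.
  by apply: mulr_ge0; lra.
have hJ' : J rho alpha theta <= 4 * pi ^+ 2 / (rho * (1 - rho)).
  apply: (le_trans hJ); rewrite ler_piMl //; lra.
have -> : 4 * pi ^+ 2 * t%:R / (rho * (1 - rho)) = t%:R * (4 * pi ^+ 2 / (rho * (1 - rho))) by ring.
by apply: ler_wpM2l => //; exact: ler0n.
Qed.
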